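(* Let $\mathcal S=(s_\alpha)_{\alpha\in L(\omega_1)}$ be a ladder system on $\omega_1$, let $K=K_{\mathcal S}$ be the associated ladder system space, and let $\phi:K\to K$ be any map whose restriction to $S(\omega_1)$ is an injection into $L(\omega_1)$ and which maps every element of $L(\omega_1)\cup\{\infty\}$ to $\infty$ (such a $\phi$ is continuous). Let $T=C_\phi:C(K)\to C(K)$, $f\mapsto f\circ\phi$. Then $T$ satisfies neither of the following conditions: (b) there exists $g\in\mathfrak B(K)$ such that $T^*+M_g^*:C(K)^*\to C(K)^*$ has separable range; (c) there exists $g\in\mathfrak B(K)$ such that the restriction of $(T^*+M_g^* )^*:C(K)^{**}\to C(K)^{**}$ to $C(K)$ (canonically embedded in $C(K)^{**}$) has separable range. In particular, there exists a bounded operator on $C(K_{\mathcal S})$ satisfying neither (b) nor (c).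
   Context: $L(\omega_1)$ denotes the set of limit ordinals in $\omega_1$ (the first uncountable ordinal) and $S(\omega_1)=\omega_1\setminus L(\omega_1)$. A ladder system on $\omega_1$ is a family $\mathcal S=(s_\alpha)_{\alpha\in L(\omega_1)}$ where for each limit $\alpha$, $s_\alpha=\{s^n_\alpha:n\in\omega\}$ and $(s^n_\alpha)_{n\in\omega}$ is a strictly increasing sequence in $S(\omega_1)$ converging (in the order sense) to $\alpha$. The ladder system topology $\tau_{\mathcal S}$ on $\omega_1$ is the topology in which every element of $S(\omega_1)$ is isolated and the basic neighborhoods of a limit ordinal $\alpha$ are the sets $\{\alpha\}\cup B$ with $B$ a cofinite subset of $s_\alpha$. This is a locally compact Hausdorff space, and $K_{\mathcal S}=\omega_1\cup\{\infty\}$ is its one-point compactification. $C(K)$ is the Banach space of continuous real-valued functions on $K$ with the sup norm; $C(K)^*$ is identified with the space of finite regular signed Borel measures on $K$. $\mathfrak B(K)$ is the space of bounded real-valued Borel functions on $K$. For $g\in\mathfrak B(K)$, $M_g^*:C(K)^*\to C(K)^*$ sends a measure $\mu$ to $g\,\mathrm d\mu$. Stars denote Banach space adjoints. *)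

(* Defs.v *)
From HB Require Import structures.
From mathcomp Require Import all_boot all_order all_algebra.
From mathcomp Require Import all_classical all_reals all_analysis.
Set Implicit Arguments. Unset Strict Implicit. Unset Printing Implicit Defensive.
Import Order.TTheory GRing.Theory Num.Theory.
Import numFieldNormedType.Exports.
Local Open Scope classical_set_scope.
Local Open Scope ring_scope.

Section Ordinals.
Context {d : Order.disp_t} {W : orderType d}.

Definition is_omega1 : Prop :=
  [/\ (forall A : set W, A !=set0 -> exists2 a, A a & forall b, A b -> (a <= b)%O),
      ~ countable [set: W] &
      forall a : W, countable [set b | (b < a)%O]].

Definition is_limit (a : W) : Prop :=
  (exists b, (b < a)%O) /\ forall b, (b < a)%O -> exists c, (b < c)%O /\ (c < a)%O.

Definition ladder_system (s : W -> nat -> W) : Prop :=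
  forall a, is_limit a ->
  [/\ forall n, (s a n < s a n.+1)%O,
      forall n, ~ is_limit (s a n),
      forall n, (s a n < a)%O &
      forall b, (b < a)%O -> exists n, (b < s a n)%O].

Definition ladder_open (s : W -> nat -> W) (U : set W) : Prop :=
  forall a, is_limit a -> U a -> exists N, forall n, (N <= n)%N -> U (s a n).

Definition ladder_space (s : W -> nat -> W) : Type := W.

Variable s : W -> nat -> W.

HB.instance Definition _ := Choice.on (ladder_space s).

Lemma ladder_openT : ladder_open s setT.
Proof. by move=> a _ _; exists 0%N. Qed.

Lemma ladder_openI : setI_closed (ladder_open s).
Proof.
move=> U V oU oV a la [Ua Va].
have [N1 H1] := oU a la Ua; have [N2 H2] := oV a la Va.
exists (maxn N1 N2) => n Hn; split.
  by apply: H1; apply: leq_trans Hn; rewrite leq_maxl.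
by apply: H2; apply: leq_trans Hn; rewrite leq_maxr.
Qed.

Lemma ladder_open_bigU (I : Type) (f : I -> set W) :
  (forall i, ladder_open s (f i)) -> ladder_open s (\bigcup_i f i).
Proof.
move=> hf a la [i _ fia]; have [N HN] := hf i a la fia.
by exists N => n Hn; exists i => //; apply: HN.
Qed.

HB.instance Definition _ := isOpenTopological.Build (ladder_space s)
  ladder_openT ladder_openI ladder_open_bigU.

End Ordinals.

(** K_S = omega_1 U {oo} (None = oo), one-point compactification of (omega_1, tau_S) *)
Notation ladder_K s := (one_point_compactification (ladder_space s)).

Definition borel (T : topologicalType) := g_sigma_algebraType (@open T).


Section Banach.
Context {R : realType} {d : Order.disp_t} {W : orderType d} {s : W -> nat -> W}.
Local Notation T := (ladder_K s).

Definition sup_le1 (f : T -> R) : Prop := forall x, `|f x| <= 1.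

Definition bounded_borel (g : T -> R) : Prop :=
  @measurable_fun _ _ (borel T) R setT g /\ exists M : R, forall x, `|g x| <= M.

Definition regular_measure (mu : {finite_measure set borel T -> \bar R}) : Prop :=
  forall A : set (borel T), measurable A ->
    mu A = ereal_sup [set mu C | C in [set C : set (borel T) | @compact T C /\ C `<=` A]]
    /\ mu A = ereal_inf [set mu U | U in [set U : set (borel T) | @open T U /\ A `<=` U]].

(** A finite regular signed Borel measure is represented as mu1 - mu2 with
    mu1, mu2 finite regular (positive) Borel measures; integral of a bounded
    Borel function h against it. *)
Definition sintegral (mu1 mu2 : {finite_measure set borel T -> \bar R})
  (h : T -> R) : R :=
  Rintegral mu1 setT (h : borel T -> R) - Rintegral mu2 setT (h : borel T -> R).

(** The functional on C(T) given by (T^* + M_g^* ) mu, where T = C_phi and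
    mu = mu1 - mu2:  f |-> <mu, f o phi> + <g dmu, f>. *)
Definition adjsum_apply (phi : T -> T) (g : T -> R)
  (mu1 mu2 : {finite_measure set borel T -> \bar R}) (f : T -> R) : R :=
  sintegral mu1 mu2 (f \o phi) + sintegral mu1 mu2 (fun x => g x * f x).

Definition adjsum_range (phi : T -> T) (g : T -> R) : set ((T -> R) -> R) :=
  [set Psi | exists mu1 mu2, [/\ regular_measure mu1, regular_measure mu2 &
     Psi = adjsum_apply phi g mu1 mu2]].

Definition dual_dist_le (Psi1 Psi2 : (T -> R) -> R) (e : R) : Prop :=
  forall f : T -> R, continuous f -> sup_le1 f -> `|Psi1 f - Psi2 f| <= e.

Definition cond_b (phi : T -> T) (g : T -> R) : Prop :=
  exists D : set ((T -> R) -> R),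
    [/\ countable D, D `<=` adjsum_range phi g &
        forall Psi, adjsum_range phi g Psi -> forall e : R, 0 < e ->
          exists2 Psi', D Psi' & dual_dist_le Psi Psi' e].

(** ||(T^*+M_g^* )^* f1 - (T^*+M_g^* )^* f2||_{C(T)^{**}} <= e, for f1, f2 in C(T)
    embedded canonically in C(T)^{**}; the sup runs over the unit ball of
    C(T)^{*} (regular signed measures of dual norm <= 1). *)
Definition bidual_dist_le (phi : T -> T) (g : T -> R) (f1 f2 : T -> R) (e : R) : Prop :=
  forall mu1 mu2 : {finite_measure set borel T -> \bar R},
    regular_measure mu1 -> regular_measure mu2 ->
    (forall h : T -> R, continuous h -> sup_le1 h -> `|sintegral mu1 mu2 h| <= 1) ->
    `|adjsum_apply phi g mu1 mu2 f1 - adjsum_apply phi g mu1 mu2 f2| <= e.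

Definition cond_c (phi : T -> T) (g : T -> R) : Prop :=
  exists D : set (T -> R),
    [/\ countable D, (forall f : T -> R, D f -> continuous f) &
        forall f : T -> R, continuous f -> forall e : R, 0 < e ->
          exists2 f', D f' & bidual_dist_le phi g f f' e].

End Banach.

Definition phi_cond {d : Order.disp_t} {W : orderType d} (s : W -> nat -> W)
  (phi : ladder_K s -> ladder_K s) : Prop :=
  [/\ (forall a, ~ is_limit a -> exists2 b, is_limit b & phi (Some a) = Some b),
      (forall a b, ~ is_limit a -> ~ is_limit b -> phi (Some a) = phi (Some b) -> a = b),
      (forall a, is_limit a -> phi (Some a) = None) &
      phi None = None].

(* Main.v *)
Require Import Defs.
From HB Require Import structures.
From mathcomp Require Import all_boot all_order all_algebra.
From mathcomp Require Import all_classical all_reals all_analysis.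
From mathcomp Require Import finmap.
From mathcomp Require Import lra.
Import Order.TTheory GRing.Theory Num.Theory.
Import numFieldNormedType.Exports.
Local Open Scope classical_set_scope.
Local Open Scope ring_scope.


Lemma countableU2 T (A B : set T) : countable A -> countable B -> countable (A `|` B).
Proof.
move=> cA cB.
have -> : A `|` B = \bigcup_(i in [set: bool]) (if i then A else B).
  apply/seteqP; split=> x.
    by case=> ?; [exists true|exists false].
  by case=> -[] _ ?; [left|right].
by apply: bigcup_countable => // -[].
Qed.

Section Ord.
Context {d : Order.disp_t} {W : orderType d}.
Hypothesis Hw : @is_omega1 d W.
Local Open Scope order_scope.

Lemma wmin (A : set W) : A !=set0 -> exists2 a, A a & forall b, A b -> a <= b.
Proof. move: Hw. rewrite /is_omega1. move=> [H1 H2 H3]. exact: H1. Qed.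

Lemma wuncount : ~ countable [set: W].
Proof. move: Hw. rewrite /is_omega1. move=> [H1 H2 H3]. exact: H2. Qed.

Lemma wseg (a : W) : countable [set b | b < a].
Proof. move: Hw. rewrite /is_omega1. move=> [H1 H2 H3]. exact: H3. Qed.

Lemma wseg_le (a : W) : countable [set b | b <= a].
Proof.
have -> : [set b | b <= a] = [set b | b < a] `|` [set a].
  apply/seteqP; split=> x /=; first by rewrite le_eqVlt => /orP[/eqP->|]; [right|left].
  by case=> [/ltW|->].
exact: countableU2 (wseg a) (countable1 a).
Qed.

Lemma wbound (A : set W) : countable A -> exists c, forall x, A x -> x < c.
Proof.
move=> cA.
have cU : countable (\bigcup_(x in A) [set b | b <= x]).
  by apply: bigcup_countable => // x _; exact: wseg_le.
have [c nc] : exists c, ~ (\bigcup_(x in A) [set b | b <= x]) c.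
  apply: contrapT => /forallNP H; apply: wuncount.
  by apply: sub_countable cU; apply: subset_card_le => x _; apply: contrapT; apply: H.
exists c => x Ax; rewrite ltNge; apply/negP => cx; apply: nc; by exists x.
Qed.

Lemma wnomax (a : W) : exists b, a < b.
Proof. by have [c Hc] := @wbound _ (countable1 a); exists c; apply: Hc. Qed.

Lemma wsucc (a : W) : exists b, a < b /\ forall c, a < c -> b <= c.
Proof.
have [b ab] := wnomax a.
have [m Am Hm] := @wmin [set c | a < c] (ex_intro _ b ab).
by exists m; split.
Qed.

Lemma succ_nonlimit {a b : W} : (a < b /\ forall c, a < c -> b <= c) -> ~ is_limit b.
Proof.
move=> [ab Hb] [_ H]; have [c [ac cb]] := H a ab.
by have := Hb c ac; rewrite leNgt cb.
Qed.

Lemma nonlimit_uncount : ~ countable [set a : W | ~ is_limit a].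
Proof.
move=> /countable_injP [f finj]; apply: wuncount.
have [sc Hsc] := choice wsucc.
apply/countable_injP; exists (f \o sc) => x y _ _ /= E.
have := finj _ _ (mem_set (succ_nonlimit (Hsc x))) (mem_set (succ_nonlimit (Hsc y))) E.
move=> E2; apply/eqP; rewrite eq_le !leNgt; apply/andP; split; apply/negP => H.
- have := (Hsc y).2 _ H; rewrite -E2 leNgt => /negP; apply; exact: (Hsc x).1.
- have := (Hsc x).2 _ H; rewrite E2 leNgt => /negP; apply; exact: (Hsc y).1.
Qed.

Lemma limit_above (a : W) : exists m, a < m /\ is_limit m.
Proof.
have [sc Hsc] := choice wsucc.
pose u := fix u n := if n is n'.+1 then sc (u n') else a.
have cA : countable (range u) by apply: sub_countable (card_image_le _ _) _.
have [c Hc] := @wbound _ cA.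
have [m Am Hm] := @wmin [set m | forall x, range u x -> x < m] (ex_intro _ c Hc).
exists m; split; first by apply: Am; exists 0%N.
split; first by exists a; apply: Am; exists 0%N.
move=> b bm.
have : ~ (forall x, range u x -> x < b).
  by move=> H; have := Hm _ H; rewrite leNgt bm.
move=> /existsNP [x /not_implyP [[n _ <-]]] /negP; rewrite -leNgt => bun.
exists (u n.+1); split.
  by apply: le_lt_trans bun _; exact: (Hsc (u n)).1.
by apply: Am; exists n.+1.
Qed.

Lemma limit_uncount : ~ countable [set a : W | is_limit a].
Proof.
move=> /wbound [c Hc]; have [m [cm lm]] := limit_above c.
by have := Hc _ lm; rewrite ltNge (ltW cm).
Qed.

Lemma wwf : well_founded (fun x y : W => x < y).
Proof.
move=> a; apply: contrapT => na.
have [m Am Hm] := @wmin [set x | ~ Acc (fun x y : W => x < y) x] (ex_intro _ a na).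
apply: Am; constructor => y ym; apply: contrapT => ny.
by have := Hm _ ny; rewrite leNgt ym.
Qed.

Lemma inj_into_limits : exists e : W -> W, (forall a, is_limit (e a)) /\ injective e.
Proof.
pose P (a : W) (rec : forall b, b < a -> W) (l : W) :=
  is_limit l /\ forall b (h : b < a), l <> rec b h.
have Pex a rec : exists l, P a rec l.
  apply: contrapT => /forallNP H; apply: limit_uncount.
  have cI : countable [set l | exists b (h : b < a), l = rec b h].
    pose r b := match pselect (b < a) with left h => rec b h | right _ => a end.
    apply: sub_countable (wseg a); apply: card_le_trans (card_image_le r _).
    apply: subset_card_le => l [b [h ->]]; exists b => //.
    by rewrite /r; case: pselect => // h'; rewrite (Prop_irrelevance h h').
  apply: sub_countable cI; apply: subset_card_le => l ll.
  have := H l; move=> /not_andP [//|] /existsNP [b /existsNP [h /contrapT E]].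
  by exists b, h.
pose F a rec := projT1 (cid (Pex a rec)).
have FP a rec : P a rec (F a rec) := projT2 (cid (Pex a rec)).
pose e := Fix wwf (fun _ => W) F.
have eE a : e a = F a (fun b _ => e b).
  rewrite /e Fix_eq // => x f g fg; rewrite /F.
  suff -> : f = g by [].
  by apply: functional_extensionality_dep => y; apply: functional_extensionality_dep => h.
exists e; split; first by move=> a; rewrite eE; exact: (FP _ _).1.
move=> x y exy; apply/eqP; rewrite eq_le !leNgt; apply/andP; split; apply/negP => H.
- by have := (FP x (fun b _ => e b)).2 y H; rewrite -eE exy.
- by have := (FP y (fun b _ => e b)).2 x H; rewrite -eE exy.
Qed.

End Ord.


Definition ev (P : nat -> Prop) := exists N, forall n, (N <= n)%N -> P n.

Lemma evI {P Q} : ev P -> ev Q -> ev (fun n => P n /\ Q n).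
Proof.
move=> [N1 H1] [N2 H2]; exists (maxn N1 N2) => n Hn; split.
  by apply: H1; apply: leq_trans Hn; rewrite leq_maxl.
by apply: H2; apply: leq_trans Hn; rewrite leq_maxr.
Qed.

Lemma evS {P Q} : (forall n, P n -> Q n) -> ev P -> ev Q.
Proof. by move=> PQ [N H]; exists N => n /H /PQ. Qed.

Lemma ev_seq (T : eqType) (l : seq T) (P : T -> nat -> Prop) :
  (forall x, x \in l -> ev (P x)) -> ev (fun n => forall x, x \in l -> P x n).
Proof.
elim: l => [|y l IH] H; first by exists 0%N => n _ x.
have := evI (H y (mem_head _ _)) (IH (fun x xl => H x (mem_behead (s:=y :: l) xl))).
apply: evS => n [Py Pl] x; rewrite in_cons => /orP[/eqP->//|]; exact: Pl.
Qed.

Lemma ev_lt (M : nat) (P : nat -> nat -> Prop) :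
  (forall m, (m < M)%N -> ev (P m)) -> ev (fun n => forall m, (m < M)%N -> P m n).
Proof.
move=> H; have E := @ev_seq _ (iota 0 M) P.
have : ev (fun n => forall x, x \in iota 0 M -> P x n).
  by apply: E => x; rewrite mem_iota => /andP[_]; rewrite add0n; exact: H.
by apply: evS => n Hn m mM; apply: Hn; rewrite mem_iota add0n mM.
Qed.

Lemma ev_atmost1 (P : nat -> Prop) : (forall n m, P n -> P m -> n = m) -> ev (fun n => ~ P n).
Proof.
move=> H; have [[n0 Pn0]|] := pselect (exists n, P n).
  by exists n0.+1 => n Hn Pn; have := H _ _ Pn Pn0; move=> E; rewrite E ltnn in Hn.
by move=> /forallNP nP; exists 0%N => n _; apply: nP.
Qed.

Section Topo.
Context {d : Order.disp_t} {W : orderType d} (s : W -> nat -> W).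
Hypothesis Hw : @is_omega1 d W.
Hypothesis Hs : ladder_system s.
Local Notation X := (ladder_space s).

Lemma s_inc {a} n : is_limit a -> (s a n < s a n.+1)%O.
Proof. by move=> la; case: (Hs a la). Qed.
Lemma s_nl {a} n : is_limit a -> ~ is_limit (s a n).
Proof. by move=> la; case: (Hs a la). Qed.
Lemma s_lt {a} n : is_limit a -> (s a n < a)%O.
Proof. by move=> la; case: (Hs a la). Qed.
Lemma s_cof {a} b : is_limit a -> (b < a)%O -> exists n, (b < s a n)%O.
Proof. by move=> la; case: (Hs a la) => _ _ _; apply. Qed.

Lemma s_strict {a n m} : is_limit a -> (n < m)%N -> (s a n < s a m)%O.
Proof.
move=> la; elim: m => // m IH; rewrite ltnS leq_eqVlt => /orP[/eqP->|/IH h].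
  exact: s_inc.
exact: lt_trans h (s_inc m la).
Qed.

Lemma s_mono {a n m} : is_limit a -> (n <= m)%N -> (s a n <= s a m)%O.
Proof.
move=> la; rewrite leq_eqVlt => /orP[/eqP->//|h]; exact/ltW/s_strict.
Qed.

Lemma s_inj {a n m} : is_limit a -> s a n = s a m -> n = m.
Proof.
move=> la E; case: (ltngtP n m) => // h.
  by have := s_strict la h; rewrite E ltxx.
by have := s_strict la h; rewrite E ltxx.
Qed.

Lemma ev_above {a b} : is_limit a -> (b < a)%O -> ev (fun n => (b < s a n)%O).
Proof.
move=> la ba; have [n0 Hn0] := s_cof b la ba; exists n0 => n Hn.
exact: lt_le_trans Hn0 (s_mono la Hn).
Qed.

Lemma ev_ne {a} p : is_limit a -> ev (fun n => s a n <> p).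
Proof.
move=> la; have [pa|] := boolP (p < a)%O.
  by apply: evS (ev_above la pa) => n h E; rewrite E ltxx in h.
rewrite -leNgt => ap; exists 0%N => n _ E.
by have := s_lt n la; rewrite E ltNge ap.
Qed.

Definition tail (g : W) (N : nat) : set W :=
  [set x | x = g \/ exists2 n, (N <= n)%N & x = s g n].

Lemma openX (U : set X) : ladder_open s U -> open U.
Proof. by []. Qed.
Lemma Xopen (U : set X) : open U -> ladder_open s U.
Proof. by []. Qed.

Lemma open_tail g N : is_limit g -> @open X (tail g N).
Proof.
move=> lg; apply: openX => a la [->|[n _ E]]; last by rewrite E in la; have := s_nl n lg.
by exists N => n Hn; right; exists n.
Qed.

Lemma closedP (C : set X) : (forall a, is_limit a -> ~ C a -> ev (fun n => ~ C (s a n))) ->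
  closed C.
Proof.
move=> H; rewrite -(setCK C); apply: open_closedC; apply: openX => a la nCa.
by have [N HN] := H a la nCa; exists N.
Qed.

Lemma closed_tail g N : is_limit g -> @closed X (tail g N).
Proof.
move=> lg; apply: closedP => a la nt.
have ag : a <> g by move=> E; apply: nt; left.
have [/lt_total|] := boolP (a != g); last by move/negPn/eqP.
case/orP => [ag'|ga].
-
  have [M HM] := s_cof a lg ag'.
  have E1 : ev (fun n => forall m, (m < M)%N -> s a n <> s g m).
    by apply: ev_lt => m _; exact: ev_ne.
  apply: evS E1 => n Hn [E|[m _ E]]; first by have := s_nl n la; rewrite E => /(_ lg).
  have [mM|] := ltnP m M; first exact: Hn m mM E.
  move=> Mm; have := lt_le_trans HM (s_mono lg Mm); rewrite -E.
  by move=> h; have := lt_trans h (s_lt n la); rewrite ltxx.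
-
  apply: evS (ev_above la ga) => n h [E|[m _ E]]; first by rewrite E ltxx in h.
  by have := lt_trans (s_lt m lg) h; rewrite E ltxx.
Qed.

Lemma closed_single (p : X) : closed [set p].
Proof. by apply: closedP => a la _; apply: evS (ev_ne p la) => n h E; apply: h. Qed.

Lemma open_single (p : X) : ~ is_limit p -> open [set p].
Proof. by move=> np; apply: openX => a la E; rewrite E in la. Qed.

Lemma compact_tail g N : is_limit g -> @compact X (tail g N).
Proof.
move=> lg F FF Ft.
have [cg|ncg] := pselect (cluster F g); first by exists g; split => //; left.
have [A [B [FA nB nAB]]] : exists (A B : set X), [/\ F A, nbhs (g : X) B & ~ (A `&` B !=set0)].
  apply: contrapT => H; apply: ncg => A B FA nB; apply: contrapT => nAB.
  by apply: H; exists A, B.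
move: nB; rewrite nbhsE => -[V [oV Vg] VB].
have [N0 HN0] := @Xopen V oV g lg Vg.
pose S := (s g) @` [set n | (N <= n)%N /\ (n < N0)%N].
have fS : finite_set S.
  apply: finite_image; apply: sub_finite_set (finite_II N0).
  by move=> n [_ h].
have FS : F S.
  apply: filterS (filterI FA Ft) => x [Ax [E|[n Nn E]]].
    by exfalso; apply: nAB; exists x; split => //; apply: VB; rewrite E.
  have [nN0|N0n] := ltnP n N0; first by exists n.
  by exfalso; apply: nAB; exists x; split => //; apply: VB; rewrite E; apply: HN0.
have [p [Sp cp]] := @finite_compact X S fS F FF FS.
exists p; split => //; case: Sp => n [Nn _] <-; right; by exists n.
Qed.

End Topo.


Lemma indic_cont (R : realType) (T : topologicalType) (V : set T) :
  open V -> open (~` V) -> continuous (\1_V : T -> R).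
Proof.
move=> oV oCV; apply/continuousP => A oA.
have -> : (\1_V : T -> R) @^-1` A =
    (if `[< A 1 >] then V else set0) `|` (if `[< A 0 >] then ~` V else set0).
  apply/seteqP; split=> x /=; case: (asboolP (A 1)) => h1; case: (asboolP (A 0)) => h0;
    rewrite indicE; case: (pselect (V x)) => xV; rewrite ?(mem_set xV) ?(memNset xV) /=;
    first [by left | by right | by move=> /h1 | by move=> /h0 | by case | idtac].
by apply: openU; [case: (asboolP (A 1)) | case: (asboolP (A 0))] => _ //; exact: open0.
Qed.

Section KTopo.
Context {d : Order.disp_t} {W : orderType d} (s : W -> nat -> W).
Hypothesis Hw : @is_omega1 d W.
Hypothesis Hs : ladder_system s.
Local Notation X := (ladder_space s).
Local Notation K := (ladder_K s).

Lemma nbhs_NoneP (A : set K) : nbhs (None : K) A <->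
  exists2 C : set X, compact C /\ closed C & (Some @` (~` C) `|` [set None]) `<=` A.
Proof. by []. Qed.

Lemma openKC_Some (U : set X) : compact U -> closed U -> open (~` (Some @` U) : set K).
Proof.
move=> cU clU; rewrite openE => -[x|] nU.
  have nUx : ~ U x by move=> Ux; apply: nU; exists x.
  have : nbhs (Some x : K) (Some @` (~` U)).
    apply: one_point_compactification_some_nbhs; apply: open_nbhs_nbhs.
    by split => //; exact: closed_openC.
  by apply: filterS => _ [y nUy <-] [z Uz [E]]; apply: nUy; rewrite -E.
apply/nbhs_NoneP; exists U => //.
by move=> _ [[y nUy <-] [z Uz [E]]|-> [z _ //]]; apply: nUy; rewrite -E.
Qed.

Lemma openK_Some (U : set X) : open U -> open (Some @` U : set K).
Proof. exact: one_point_compactification_open_some. Qed.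

Lemma limits_in_compact (C : set X) : compact C ->
  exists (D' : {fset (ladder_K s)}), forall b, C b -> is_limit b -> (Some b : K) \in D'.
Proof.
move=> cC.
have cK : compact (Some @` C : set K).
  apply: continuous_compact => //; apply: continuous_subspaceT.
  exact: one_point_compactification_some_continuous.
move: cK; rewrite compact_cover => cK.
pose f (i : K) : set K := if i is Some x then
  Some @` (if pselect (is_limit x) then tail s x 0 else [set x]) else set0.
have fo : forall i, (Some @` C) i -> open (f i).
  move=> _ [x _ <-] /=; apply: openK_Some; case: pselect => lx.
    exact: open_tail.
  exact: open_single.
have cov : (Some @` C) `<=` cover (Some @` C) f.
  move=> _ [x Cx <-]; exists (Some x); first by exists x.
  rewrite /f; case: pselect => lx; exists x => //; first by left.
have [D' sD' cD'] := cK K (Some @` C) f fo cov.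
exists D' => b Cb lb.
have [i D'i fi] := cD' (Some b) (ex_intro2 _ _ b Cb erefl).
move: fi; case: i D'i => [x|] D'i //=.
case: pselect => lx [y + [E]]; subst y.
  case=> [->//|[n _ E2]]; rewrite E2 in lb; by have := s_nl _ Hs n lx.
by move=> ->.
Qed.

Lemma phi_cont (phi : K -> K) : phi_cond phi -> continuous phi.
Proof.
move=> [H1 H2 H3 H4].
have [G HG] : {G : W -> W & forall a, ~ is_limit a -> is_limit (G a) /\ phi (Some a) = Some (G a)}.
  apply: (@choice _ _ (fun a b => ~ is_limit a -> is_limit b /\ phi (Some a) = Some b)) => a; case: (pselect (is_limit a)) => la; first by exists a.
  by have [b lb E] := H1 a la; exists b.
have Ginj a b : ~ is_limit a -> ~ is_limit b -> G a = G b -> a = b.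
  move=> na nb E; apply: H2 => //; by rewrite (HG a na).2 (HG b nb).2 E.
have evD a (D' : {fset (ladder_K s)}) : is_limit a -> ev (fun n => ~ (Some (G (s a n)) : K) \in D').
  move=> la; have E := @ev_seq K D' (fun i n => (Some (G (s a n)) : K) <> i).
  have : ev (fun n => forall x, x \in D' -> (Some (G (s a n)) : K) <> x).
    apply: E => x _; apply: evS (ev_atmost1 (fun n => (Some (G (s a n)) : K) = x) _).
      by move=> n h E'; apply: h.
    move=> n m En Em; rewrite -Em in En; case: En => /Ginj E'.
    by apply: (s_inj _ Hs la); apply: E'; exact: s_nl.
  by apply: evS => n h hD; exact: h _ hD erefl.
apply/continuousP => O oO; rewrite openE => -[a|] Op.
- case: (pselect (is_limit a)) => la; last first.
    apply: (@filterS _ _ _ (Some @` [set a])).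
      by move=> _ [y -> <-].
    apply: open_nbhs_nbhs; split; first exact/openK_Some/open_single.
    by exists a.
  have : nbhs (phi (Some a)) O by move: oO; rewrite openE; apply.
  rewrite H3 // => /nbhs_NoneP [C [cC clC] CO].
  have [D' HD'] := limits_in_compact C cC.
  have [N HN] := evD a D' la.
  apply: (@filterS _ _ _ (Some @` tail s a N)); last first.
    apply: open_nbhs_nbhs; split; first exact/openK_Some/open_tail.
    by exists a => //; left.
  move=> _ [y [->|[n Nn ->]] <-]; first by rewrite /preimage /= H3 //; apply: CO; right.
  rewrite /preimage /= (HG _ (s_nl _ Hs n la)).2; apply: CO; left.
  exists (G (s a n)) => //; move=> Cg; apply: (HN n Nn); apply: HD' => //.
  exact: (HG _ (s_nl _ Hs n la)).1.
- have : nbhs (phi None) O by move: oO; rewrite openE; apply.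
  rewrite H4 => /nbhs_NoneP [C [cC clC] CO].
  have [D' HD'] := limits_in_compact C cC.
  pose C' := [set x : X | ~ is_limit x /\ (Some (G x) : K) \in D'].
  have fC' : finite_set C'.
    apply: sub_finite_set (bigcup_finite (finite_fset D')
      (F := fun i => [set x : X | ~ is_limit x /\ (Some (G x) : K) = i]) _).
      by move=> x [nx xD]; exists (Some (G x)).
    move=> i _; have [[x0 [nx0 E0]]|] := pselect (exists x : X, ~ is_limit x /\ (Some (G x) : K) = i).
      apply: sub_finite_set (finite_set1 x0) => x [nx E] /=.
      by rewrite -E0 in E; case: E => /Ginj; apply.
    move=> /forallNP h; rewrite (_ : [set _ | _] = set0) //.
    by apply/seteqP; split => x // hx; exact: h x hx.
  apply/nbhs_NoneP; exists C'; first split.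
  + exact: finite_compact.
  + apply: (closedP s) => a la nC'a; apply: evS (evD a D' la) => n h [_ hD].
    by apply: h.
  + move=> _ [[x nC'x <-]|->]; last by rewrite /preimage /= H4; apply: CO; right.
    rewrite /preimage /=; case: (pselect (is_limit x)) => lx.
      by rewrite H3 //; apply: CO; right.
    rewrite (HG x lx).2; apply: CO; left; exists (G x) => // Cg.
    by apply: nC'x; split => //; apply: HD' => //; exact: (HG x lx).1.
Qed.

End KTopo.


Lemma sup_eq (R : realType) (S : set (\bar R)) x : S x -> (forall y, S y -> (y <= x)%E) -> ereal_sup S = x.
Proof.
move=> Sx H; apply/eqP; rewrite eq_le; apply/andP; split; first exact/ereal_supP.
exact: ereal_sup_ubound.
Qed.

Lemma inf_eq (R : realType) (S : set (\bar R)) x : S x -> (forall y, S y -> (x <= y)%E) -> ereal_inf S = x.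
Proof.
move=> Sx H; apply/eqP; rewrite eq_le; apply/andP; split; last exact/ereal_infP.
exact: ereal_inf_lbound.
Qed.

Section Meas.
Context (R : realType) {d : Order.disp_t} {W : orderType d} (s : W -> nat -> W).
Hypothesis Hs : ladder_system s.
Local Notation X := (ladder_space s).
Local Notation K := (ladder_K s).

Lemma open_meas (A : set K) : open A -> measurable (A : set (borel K)).
Proof. by move=> oA; apply: sub_sigma_algebra. Qed.

Lemma cont_meas (h : K -> R) : continuous h -> measurable_fun (setT : set (borel K)) h.
Proof.
move=> /continuousP ch; apply: (measurability _ (measurable_realfun.RGenOpens.measurableE R)).
move=> _ [_ [a [b ->]] <-]; apply: measurableI => //.
by apply: open_meas; apply: ch; exact: interval_open.
Qed.

Lemma Rint_dirac (p : K) (h : K -> R) : measurable_fun (setT : set (borel K)) h ->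
  Rintegral (\d_(p : borel K) : {measure set borel K -> \bar R}) setT (h : borel K -> R) = h p.
Proof.
move=> mh; rewrite /Rintegral integral_dirac //; last exact/measurable_realfun.measurable_EFinP.
by rewrite diracT mul1e.
Qed.

Lemma Rint_zero (h : K -> R) :
  Rintegral (mzero : {measure set borel K -> \bar R}) setT (h : borel K -> R) = 0.
Proof. by rewrite /Rintegral integral_measure_zero. Qed.

Lemma regular_zero : regular_measure (mzero : {finite_measure set borel K -> \bar R}).
Proof.
move=> A mA; split.
  by apply/esym/sup_eq; [exists set0; [split => //; exact: compact0|] | move=> _ [C _ <-]].
by apply/esym/inf_eq; [exists setT; [split => //; exact: openT|] | move=> _ [C _ <-]].
Qed.

Lemma regular_dirac (a : X) : ~ is_limit a ->
  regular_measure (\d_(Some a : borel K) : {finite_measure set borel K -> \bar R}).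
Proof.
move=> na A mA; rewrite /regular_measure /=; rewrite diracE.
have [pA|pA] := pselect (A (Some a)); [rewrite (mem_set pA) | rewrite (memNset pA)]; split.
- apply/esym/sup_eq.
    exists [set (Some a : K)]; last by rewrite diracE mem_set.
    split; first exact/finite_compact/finite_set1.
    by move=> _ ->.
  move=> _ [C _ <-]; rewrite diracE; case: (_ \in _) => //=.
- apply/esym/inf_eq; first by exists setT; [split => //; exact: openT | rewrite diracE mem_set].
  by move=> _ [U [_ AU] <-]; rewrite diracE mem_set //; apply: AU.
- apply/esym/sup_eq; first by exists set0; [split => //; exact: compact0 | rewrite diracE memNset].
  move=> _ [C [_ CA] <-]; rewrite diracE memNset //.
  by move=> /CA Ap.
- apply/esym/inf_eq.
    exists (~` [set (Some a : K)]); last by rewrite diracE memNset // => /(_ erefl).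
    split.
      rewrite -image_set1; apply: openKC_Some; first exact: (@finite_compact X _ (finite_set1 a)).
      exact: (@closed_single _ _ s Hs a).
    by move=> x Ax E; apply: pA; rewrite -E.
  move=> _ [U _ <-]; rewrite diracE; case: (_ \in _) => //=.
Qed.

End Meas.


Lemma pigeon {W Y : Type} (F : set W) (D : set Y) (h : W -> Y) :
  ~ countable F -> countable D -> (forall x, F x -> D (h x)) ->
  exists x y, [/\ F x, F y, x <> y & h x = h y].
Proof.
move=> nF /countable_injP [j jinj] hD; apply: contrapT => H; apply: nF.
apply/countable_injP; exists (j \o h) => x y; rewrite !in_setE => Fx Fy /= E.
apply: contrapT => nxy; apply: H; exists x, y; split => //.
by apply: jinj => //; rewrite in_setE; apply: hD.
Qed.

Lemma tri (R : realType) (x y z : R) : `|x - y| <= 1/3 -> `|z - y| <= 1/3 -> `|x - z| <= 2/3.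
Proof.
move=> h1 h2; apply: le_trans (ler_distD y x z) _; rewrite (distrC y z); lra.
Qed.

Lemma num_contra (R : realType) (p q : R) : p = 0 \/ q = 0 ->
  ~ (`|1 - p| <= 2/3 /\ `|q - 1| <= 2/3).
Proof.
case=> -> [h1 h2].
  by move: h1; rewrite subr0 normr1; lra.
by move: h2; rewrite sub0r normrN normr1; lra.
Qed.

Section Main.
Context (R : realType) {d : Order.disp_t} {W : orderType d} (s : W -> nat -> W).
Hypothesis Hw : @is_omega1 d W.
Hypothesis Hs : ladder_system s.
Local Notation X := (ladder_space s).
Local Notation K := (ladder_K s).

Variable phi : K -> K.
Hypothesis Hphi : phi_cond phi.

Let H1 : forall a, ~ is_limit a -> exists2 b, is_limit b & phi (Some a) = Some b.
Proof. by case: Hphi. Qed.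
Let H2 : forall a b, ~ is_limit a -> ~ is_limit b -> phi (Some a) = phi (Some b) -> a = b.
Proof. by case: Hphi. Qed.

Let Gex : {G : W -> W & forall a, ~ is_limit a -> is_limit (G a) /\ phi (Some a) = Some (G a)}.
Proof.
apply: (@choice _ _ (fun a b => ~ is_limit a -> is_limit b /\ phi (Some a) = Some b)) => a.
case: (pselect (is_limit a)) => la; first by exists a.
by have [b lb E] := H1 a la; exists b.
Qed.
Let G := projT1 Gex.
Let HG : forall a, ~ is_limit a -> is_limit (G a) /\ phi (Some a) = Some (G a) := projT2 Gex.

Let Ginj a b : ~ is_limit a -> ~ is_limit b -> G a = G b -> a = b.
Proof. by move=> na nb E; apply: H2 => //; rewrite (HG _ na).2 (HG _ nb).2 E. Qed.

Let Nex : {Nf : W -> nat & forall a, ~ is_limit a -> (a < G a)%O -> (a < s (G a) (Nf a))%O}.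
Proof.
apply: (@choice _ _ (fun a N => ~ is_limit a -> (a < G a)%O -> (a < s (G a) N)%O)) => a.
case: (pselect (~ is_limit a /\ (a < G a)%O)) => [[na aG]|h].
  by have [n Hn] := s_cof _ Hs a (HG _ na).1 aG; exists n.
by exists 0%N => na aG; exfalso; apply: h.
Qed.
Let Nf := projT1 Nex.
Let HN : forall a, ~ is_limit a -> (a < G a)%O -> (a < s (G a) (Nf a))%O := projT2 Nex.

Let U (a : W) : set X := tail s (G a) (Nf a).
Let f (a : W) : K -> R := \1_(Some @` U a).

Let rel (b : bool) (a u : W) := if b then (a < u)%O else (u < a)%O.
Let Fb (b : bool) := [set a | ~ is_limit a /\ rel b a (G a)].

Let side b a u : Fb b a -> U a u -> rel b a u.
Proof.
case: b => -[na /= aG] [->//|[n Nn ->]].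
  exact: lt_le_trans (HN _ na aG) (s_mono _ Hs (HG _ na).1 Nn).
exact: lt_trans (s_lt _ Hs n (HG _ na).1) aG.
Qed.

Let rel_irr b a : ~ rel b a a.
Proof. by case: b => /=; rewrite ltxx. Qed.

Let rel_asym b a c : rel b a c -> rel b c a -> False.
Proof. by case: b => /= h1 h2; have := lt_trans h1 h2; rewrite ltxx. Qed.

Let fcont a : ~ is_limit a -> continuous (f a).
Proof.
move=> na; apply: indic_cont.
  exact/openK_Some/(open_tail _ Hs _ _ (HG _ na).1).
apply: openKC_Some; first exact: (compact_tail _ _ _ (HG _ na).1).
exact: (closed_tail _ Hs _ _ (HG _ na).1).
Qed.

Let fle1 a : sup_le1 (f a).
Proof. by move=> x; rewrite /f indicE; case: (_ \in _); rewrite ?normr0 ?normr1. Qed.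

Let f_phi_self a : ~ is_limit a -> f a (phi (Some a)) = 1.
Proof.
move=> na; rewrite /f indicE (HG _ na).2 mem_set //; by exists (G a) => //; left.
Qed.

Let f_phi_other a c : ~ is_limit a -> ~ is_limit c -> a <> c -> f c (phi (Some a)) = 0.
Proof.
move=> na nc ac; rewrite /f indicE (HG _ na).2 memNset // => -[y [E|[n _ E]] [E']].
  by apply: ac; apply: Ginj => //; rewrite -E' E.
by have := s_nl _ Hs n (HG _ nc).1; rewrite -E E'; apply; exact: (HG _ na).1.
Qed.

Let f_self b a : Fb b a -> f a (Some a) = 0.
Proof.
move=> Fa; rewrite /f indicE memNset // => -[y Uy [E]].
by apply: (@rel_irr b a); apply: (@side b a a Fa); move: Uy; rewrite E.
Qed.

Let f_out a c : ~ U c a -> f c (Some a) = 0.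
Proof. by move=> nU; rewrite /f indicE memNset // => -[y Uy [E]]; apply: nU; rewrite -E. Qed.

Section WithG.
Variable g : K -> R.
Hypothesis Hg : bounded_borel g.

Let psi (x : W) (h : K -> R) := h (phi (Some x)) + g (Some x) * h (Some x).

Let adj_eq x h : continuous h ->
  adjsum_apply phi g (\d_(Some x : borel K)) mzero h = psi x h.
Proof.
move=> hc.
have Z (k : K -> R) : Rintegral (mzero : {finite_measure set borel K -> \bar R}) setT (k : borel K -> R) = 0.
  exact: Rint_zero.
have Dd (k : K -> R) : measurable_fun (setT : set (borel K)) k ->
  Rintegral (\d_(Some x : borel K) : {finite_measure set borel K -> \bar R}) setT (k : borel K -> R) = k (Some x).
  exact: Rint_dirac.
rewrite /adjsum_apply /Defs.sintegral !Z !subr0.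
rewrite !Dd //.
  apply: measurable_realfun.measurable_funM; first exact: Hg.1.
  exact: cont_meas.
apply: cont_meas => y; apply: continuous_comp; last exact: hc.
exact: phi_cont _ Hs _ Hphi y.
Qed.

Let in_range x : ~ is_limit x ->
  adjsum_range phi g (adjsum_apply phi g (\d_(Some x : borel K)) mzero).
Proof.
move=> nx; exists (\d_(Some x : borel K)), mzero; split => //.
  exact: regular_dirac.
exact: regular_zero.
Qed.

Let key b a c : Fb b a -> Fb b c -> a <> c ->
  psi c (f a) = 0 \/ psi a (f c) = 0.
Proof.
move=> Fa Fc ac.
have na := Fa.1; have nc := Fc.1.
have [Uac|nUac] := pselect (U a c).
  right; rewrite /psi f_phi_other // f_out ?mulr0 ?addr0 //.
  by move=> Uca; apply: (@rel_asym b a c (side _ _ _ Fa Uac) (side _ _ _ Fc Uca)).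
left; rewrite /psi f_phi_other // ?f_out ?mulr0 ?addr0 //.
by move=> E; apply: ac; rewrite E.
Qed.

Let psi_self b a : Fb b a -> psi a (f a) = 1.
Proof.
move=> Fa; rewrite /psi f_phi_self ?(f_self _ _ Fa) ?mulr0 ?addr0 //; exact: Fa.1.
Qed.

Let Fb_uncount : exists b, ~ countable (Fb b).
Proof.
apply: contrapT => /forallNP H; apply: (nonlimit_uncount Hw).
have : countable (Fb true `|` Fb false).
  by apply: countableU2; apply: contrapT; apply: H.
apply: sub_countable; apply: subset_card_le => a na.
have lG := (HG _ na).1.
have : G a != a by apply/eqP => E; apply: na; rewrite -E.
rewrite neq_lt => /orP[h|h]; [right|left]; by split.
Qed.

Lemma not_b : ~ cond_b phi g.
Proof.
move=> [D [cD DR Dapp]].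
have [b nF] := Fb_uncount.
pose Psi x := adjsum_apply phi g (\d_(Some x : borel K)) mzero.
have [h Hh] : {h : W -> ((K -> R) -> R) & forall x, Fb b x ->
    D (h x) /\ dual_dist_le (Psi x) (h x) (1/3)}.
  apply: (@choice _ _ (fun x P => Fb b x -> D P /\ dual_dist_le (Psi x) P (1/3))) => x.
  case: (pselect (Fb b x)) => Fx; last by exists (fun _ => 0).
  have [P' DP' HP'] := Dapp _ (in_range _ Fx.1) (1/3) ltac:(lra).
  by exists P'.
have [a [c [Fa Fc ac E]]] := pigeon _ _ h nF cD (fun x Fx => (Hh x Fx).1).
have dist (k : W) : Fb b k -> `|Psi a (f k) - Psi c (f k)| <= 2/3.
  move=> Fk; apply: tri; first exact: (Hh a Fa).2 _ (fcont _ Fk.1) (fle1 k).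
  rewrite E; exact: (Hh c Fc).2 _ (fcont _ Fk.1) (fle1 k).
have da := dist a Fa; have dc := dist c Fc.
rewrite /Psi !adj_eq in da dc; try exact: fcont (Fa.1); try exact: fcont (Fc.1).
rewrite (psi_self _ _ Fa) in da; rewrite (psi_self _ _ Fc) in dc.
exact: (@num_contra R _ _ (key _ _ _ Fa Fc ac) (conj da dc)).
Qed.

Lemma not_c : ~ cond_c phi g.
Proof.
move=> [D [cD Dc Dapp]].
have [b nF] := Fb_uncount.
have [h Hh] : {h : W -> (K -> R) & forall x, Fb b x ->
    D (h x) /\ bidual_dist_le phi g (f x) (h x) (1/3)}.
  apply: (@choice _ _ (fun x P => Fb b x -> D P /\ bidual_dist_le phi g (f x) P (1/3))) => x.
  case: (pselect (Fb b x)) => Fx; last by exists (fun _ => 0).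
  have [P' DP' HP'] := Dapp _ (fcont _ Fx.1) (1/3) ltac:(lra).
  by exists P'.
have [a [c [Fa Fc ac E]]] := pigeon _ _ h nF cD (fun x Fx => (Hh x Fx).1).
have norm1 x : ~ is_limit x -> forall h0 : K -> R, continuous h0 -> sup_le1 h0 ->
    `|Defs.sintegral (\d_(Some x : borel K)) mzero h0| <= 1.
  move=> nx h0 ch0 h01.
  have Z : Rintegral (mzero : {finite_measure set borel K -> \bar R}) setT (h0 : borel K -> R) = 0.
    exact: Rint_zero.
  have Dd : Rintegral (\d_(Some x : borel K) : {finite_measure set borel K -> \bar R}) setT (h0 : borel K -> R) = h0 (Some x).
    by apply: Rint_dirac; exact: cont_meas.
  by rewrite /Defs.sintegral Z subr0 Dd.
have dist (x : W) : ~ is_limit x ->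
    `|adjsum_apply phi g (\d_(Some x : borel K)) mzero (f a) -
      adjsum_apply phi g (\d_(Some x : borel K)) mzero (f c)| <= 2/3.
  move=> nx; apply: tri.
    by apply: (Hh a Fa).2; [exact: regular_dirac|exact: regular_zero|exact: norm1].
  by rewrite E; apply: (Hh c Fc).2; [exact: regular_dirac|exact: regular_zero|exact: norm1].
have da := dist a Fa.1; have dc := dist c Fc.1.
rewrite !adj_eq in da dc; try exact: fcont (Fa.1); try exact: fcont (Fc.1).
rewrite (psi_self _ _ Fa) in da; rewrite (psi_self _ _ Fc) in dc.
case: (key _ _ _ Fa Fc ac) => k.
  exact: (@num_contra R _ _ (or_intror k) (conj da dc)).
exact: (@num_contra R _ _ (or_introl k) (conj da dc)).
Qed.

End WithG.
End Main.


Theorem theorem6 (R : realType) (d : Order.disp_t) (W : orderType d)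
  (s : W -> nat -> W) :
  @is_omega1 d W -> ladder_system s ->
  (forall phi : ladder_K s -> ladder_K s, phi_cond phi ->
     [/\ continuous phi,
         ~ (exists g : ladder_K s -> R, bounded_borel g /\ cond_b phi g) &
         ~ (exists g : ladder_K s -> R, bounded_borel g /\ cond_c phi g)])
  /\ (exists phi : ladder_K s -> ladder_K s, phi_cond phi).
Proof.
move=> Hw Hs; split.
  move=> phi Hphi; split.
  - exact: (phi_cont _ Hs _ Hphi).
  - by move=> [g [Hg Hb]]; exact: (@not_b R _ _ s Hw Hs phi Hphi g Hg Hb).
  - by move=> [g [Hg Hc]]; exact: (@not_c R _ _ s Hw Hs phi Hphi g Hg Hc).
have [e [le einj]] := inj_into_limits Hw.
exists (fun o : ladder_K s => match o with
  | Some a => if `[< is_limit a >] then None else Some (e a) | None => None end).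
split.
- by move=> a na; exists (e a) => //=; rewrite asboolF.
- by move=> a b na nb /=; rewrite !asboolF // => -[/einj].
- by move=> a la /=; rewrite asboolT.
- by [].
Qed.
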